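(* Let $(\|\cdot\|,\mathcal{P})$ be a sparsity structure on $\mathcal{E}$, let $B:\mathcal{X}\to\mathcal{E}$ be a linear bijection, and let $A:\mathcal{X}\to\mathbb{R}^n$ be linear. Assume $\bar P=I-P$ for every $P\in\mathcal{P}$. Then $\mathcal{C}_P=\mathcal{D}_P$ for every $P\in\mathcal{P}$, and for every $k\ge0$, $\mu_k(A)=\sigma_k(A)$, where $$\mathcal{C}_P=\bigcup_{x\in\mathcal{X}:\ PBx=Bx}\mathcal{T}(x),\qquad \mathcal{D}_P=\{z\in\mathcal{X}:\ \|\bar P Bz\|\le\|PBz\|\},$$ $$\mu_k(A)=\inf_{\substack{P\in\mathcal{P}_k,\ x\in\mathcal{X}\\ PBx=Bx}}\ \inf_{z\in\mathcal{T}(x),\,z\ne 0}\frac{\|Az\|_2}{\|z\|_2},\qquad \sigma_k(A)=\inf_{\substack{P\in\mathcal{P}_k,\ z\in\mathcal{X},\ z\neq 0\\ \|\bar PBz\|\le\|PBz\|}}\frac{\|Az\|_2}{\|z\|_2}.$$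
   Context: Sparsity structure: let $\mathcal{X},\mathcal{E}$ be finite-dimensional Euclidean spaces and $B:\mathcal{X}\to\mathcal{E}$ a linear map. A sparsity structure on $\mathcal{E}$ is a norm $\|\cdot\|$ on $\mathcal{E}$, with dual norm $\|\cdot\|_*$, together with a family $\mathcal{P}$ of linear maps $\mathcal{E}\to\mathcal{E}$ such that: (i) every $P\in\mathcal{P}$ is a projector, $P^2=P$; (ii) every $P\in\mathcal{P}$ is assigned a weight $\nu(P)\ge 0$ and a linear map $\bar P:\mathcal{E}\to\mathcal{E}$ with $P\bar P=0$; (iii) for every $P\in\mathcal{P}$ and all $f,g\in\mathcal{E}$, $\|P^*f+\bar P^*g\|_*\le\max(\|f\|_*,\|g\|_* )$, where $P^*$ and $\bar P^*$ denote adjoints. For $k\ge 0$, $\mathcal{P}_k=\{P\in\mathcal{P}:\nu(P)\le k\}$. Tangent cone: for $x\in\mathcal{X}$, $\mathcal{T}(x)=\{\lambda z:\ \lambda\ge 0,\ z\in\mathcal{X},\ \|Bx+Bz\|\le\|Bx\|\}$. $\|\cdot\|_2$ is the Euclidean norm. *)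

(* Defs.v *)
From Stdlib Require Import Reals ClassicalEpsilon.
From mathcomp Require Import ssreflect ssrfun ssrbool eqtype ssrnat seq fintype bigop.

Set Implicit Arguments.
Unset Strict Implicit.
Unset Printing Implicit Defensive.

Local Open Scope R_scope.

Definition vec (d : nat) := 'I_d -> R.
Definition vzero (d : nat) : vec d := fun _ => 0.
Definition vadd d (x y : vec d) : vec d := fun i => x i + y i.
Definition vscale d (a : R) (x : vec d) : vec d := fun i => a * x i.

Definition ip d (x y : vec d) : R := \big[Rplus/0]_(i < d) (x i * y i).
Definition norm2 d (x : vec d) : R := sqrt (ip x x).

Definition mat (m p : nat) := 'I_m -> 'I_p -> R.
Definition app m p (M : mat m p) (x : vec p) : vec m :=
  fun i => \big[Rplus/0]_(j < p) (M i j * x j).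
(* Adjoint w.r.t. the standard inner products = transpose. *)
Definition adj m p (M : mat m p) : mat p m := fun j i => M i j.
Definition mmul m p q (M : mat m p) (N : mat p q) : mat m q :=
  fun i k => \big[Rplus/0]_(j < p) (M i j * N j k).
Definition idm d : mat d d := fun i j => if i == j then 1 else 0.
Definition mzero m p : mat m p := fun _ _ => 0.
Definition msub m p (M N : mat m p) : mat m p := fun i j => M i j - N i j.

Definition is_norm d (nrm : vec d -> R) : Prop :=
  (forall x, 0 <= nrm x) /\
  (forall x, nrm x = 0 -> x = @vzero d) /\
  (forall a x, nrm (vscale a x) = Rabs a * nrm x) /\
  (forall x y, nrm (vadd x y) <= nrm x + nrm y).

Definition dual_norm d (nrm : vec d -> R) (f : vec d) : R :=
  epsilon (inhabits 0)
    (fun s => is_lub (fun t => exists e, nrm e <= 1 /\ t = ip f e) s).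

Definition sparsity_structure d (nrm : vec d -> R) (fam : mat d d -> Prop)
  (nu : mat d d -> R) (Pbar : mat d d -> mat d d) : Prop :=
  is_norm nrm /\
  forall P, fam P ->
    mmul P P = P /\
    0 <= nu P /\
    mmul P (Pbar P) = @mzero d d /\
    (forall f g, dual_norm nrm (vadd (app (adj P) f) (app (adj (Pbar P)) g))
                 <= Rmax (dual_norm nrm f) (dual_norm nrm g)).

Definition tcone m p (nrm : vec m -> R) (B : mat m p) (x : vec p) (w : vec p) : Prop :=
  exists l z, 0 <= l /\ nrm (vadd (app B x) (app B z)) <= nrm (app B x)
              /\ w = vscale l z.

Definition CP m p (nrm : vec m -> R) (B : mat m p) (P : mat m m) (z : vec p) : Prop :=
  exists x, app P (app B x) = app B x /\ tcone nrm B x z.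

Definition DP m p (nrm : vec m -> R) (B : mat m p) (P Pb : mat m m) (z : vec p) : Prop :=
  nrm (app Pb (app B z)) <= nrm (app P (app B z)).

(* Extended reals and the infimum of a set of reals (inf of empty = +oo). *)
Inductive Rbar := Fin (r : R) | PInf | MInf.
Definition Rbar_le (a b : Rbar) : Prop :=
  match a, b with
  | MInf, _ => True
  | _, PInf => True
  | Fin x, Fin y => x <= y
  | _, _ => False
  end.
Definition is_inf (S : R -> Prop) (m : Rbar) : Prop :=
  (forall s, S s -> Rbar_le m (Fin s)) /\
  (forall l, (forall s, S s -> Rbar_le l (Fin s)) -> Rbar_le l m).
Definition Inf (S : R -> Prop) : Rbar := epsilon (inhabits PInf) (is_inf S).

(* mu_k(A) and sigma_k(A); the nested infimum in mu_k is written as a single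
   infimum over the union of the index sets. *)
Definition mu_k n m p (nrm : vec m -> R) (fam : mat m m -> Prop) (nu : mat m m -> R)
  (B : mat m p) (A : mat n p) (k : R) : Rbar :=
  Inf (fun r => exists P x z, fam P /\ nu P <= k /\ app P (app B x) = app B x /\
        tcone nrm B x z /\ z <> @vzero p /\ r = norm2 (app A z) / norm2 z).

Definition sigma_k n m p (nrm : vec m -> R) (fam : mat m m -> Prop) (nu : mat m m -> R)
  (Pbar : mat m m -> mat m m) (B : mat m p) (A : mat n p) (k : R) : Rbar :=
  Inf (fun r => exists P z, fam P /\ nu P <= k /\ z <> @vzero p /\
        DP nrm B P (Pbar P) z /\ r = norm2 (app A z) / norm2 z).

(* Main.v *)
Require Import Defs.
From Stdlib Require Import Reals Lra ClassicalEpsilon FunctionalExtensionality Classical PropExtensionality.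
From HB Require Import structures.
From mathcomp Require Import ssreflect ssrfun ssrbool eqtype ssrnat seq fintype bigop.
Set Implicit Arguments.
Unset Strict Implicit.
Local Open Scope R_scope.

Lemma Radd_assoc : associative Rplus. Proof. move=> *; ring. Qed.
Lemma Rmul_assoc : associative Rmult. Proof. move=> *; ring. Qed.
HB.instance Definition _ := Monoid.isComLaw.Build R 0 Rplus Radd_assoc Rplus_comm Rplus_0_l.
HB.instance Definition _ := Monoid.isMulLaw.Build R 0 Rmult Rmult_0_l Rmult_0_r.
HB.instance Definition _ := Monoid.isAddLaw.Build R Rmult Rplus Rmult_plus_distr_r Rmult_plus_distr_l.

Lemma vec_ext m (x y : vec m) : (forall i, x i = y i) -> x = y.
Proof. move=> H; exact: functional_extensionality. Qed.

Lemma ip_add_r m (f x y : vec m) : ip f (vadd x y) = ip f x + ip f y.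
Proof. rewrite /ip /vadd -big_split /=; apply: eq_bigr => i _; ring. Qed.
Lemma ip_add_l m (f g x : vec m) : ip (vadd f g) x = ip f x + ip g x.
Proof. rewrite /ip /vadd -big_split /=; apply: eq_bigr => i _; ring. Qed.
Lemma ip_scale_r m a (f x : vec m) : ip f (vscale a x) = a * ip f x.
Proof. rewrite /ip /vscale big_distrr /=; apply: eq_bigr => i _; ring. Qed.
Lemma ip_scale_l m a (f x : vec m) : ip (vscale a f) x = a * ip f x.
Proof. rewrite /ip /vscale big_distrr /=; apply: eq_bigr => i _; ring. Qed.
Lemma ip_comm m (f x : vec m) : ip f x = ip x f.
Proof. rewrite /ip; apply: eq_bigr => i _; ring. Qed.
Lemma ip_zero_r m (f : vec m) : ip f (@vzero m) = 0.
Proof. rewrite /ip big1 // => i _; rewrite /vzero; ring. Qed.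

Definition ev m (k : 'I_m) : vec m := fun i => if i == k then 1 else 0.
Arguments ev {m}.

Lemma ip_ev m (f : vec m) (k : 'I_m) : ip f (ev k) = f k.
Proof.
rewrite /ip (bigD1 k) //= big1 /ev ?eqxx; first ring.
by move=> i /negbTE ->; ring.
Qed.

Lemma app_add m p (M : mat m p) x y : app M (vadd x y) = vadd (app M x) (app M y).
Proof. apply: vec_ext => i; exact: ip_add_r. Qed.
Lemma app_scale m p (M : mat m p) a x : app M (vscale a x) = vscale a (app M x).
Proof. apply: vec_ext => i; exact: ip_scale_r. Qed.

Lemma app_mmul m p q (M : mat m p) (N : mat p q) x :
  app (mmul M N) x = app M (app N x).
Proof.
apply: vec_ext => i; rewrite /app /mmul.
under eq_bigr => j _ do rewrite big_distrl /=.
rewrite exchange_big /=; apply: eq_bigr => k _.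
rewrite big_distrr /=; apply: eq_bigr => j _; ring.
Qed.

Lemma ip_adj m p (M : mat m p) f x : ip (app (adj M) f) x = ip f (app M x).
Proof.
rewrite /ip /app /adj.
under eq_bigr => j _ do rewrite big_distrl /=.
rewrite exchange_big /=; apply: eq_bigr => k _.
rewrite big_distrr /=; apply: eq_bigr => j _; ring.
Qed.

Lemma app_Pbar m (P : mat m m) x :
  app (msub (@idm m) P) x = vadd x (vscale (-1) (app P x)).
Proof.
apply: vec_ext => i; rewrite /app /msub /vadd /vscale.
have -> : \big[Rplus/0]_(j < m) ((idm i j - P i j) * x j) =
  \big[Rplus/0]_(j < m) (idm i j * x j) + \big[Rplus/0]_(j < m) (-1 * (P i j * x j)).
  rewrite -big_split /=; apply: eq_bigr => j _; ring.
rewrite -big_distrr /=; congr (_ + _).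
rewrite (bigD1 i) //= big1 /idm ?eqxx; first ring.
by move=> j /negbTE; rewrite eq_sym => ->; ring.
Qed.

Lemma vdecomp m (x : vec m) : x = \big[@vadd m/@vzero m]_(k < m) vscale (x k) (ev k).
Proof.
apply: vec_ext => i.
rewrite (big_morph (fun v : vec m => v i) (id1 := 0) (op1 := Rplus)) //.
rewrite (bigD1 i) //= big1 /vscale /ev ?eqxx; first ring.
by move=> j /negbTE; rewrite eq_sym => ->; ring.
Qed.

Definition sublin m (q : vec m -> R) :=
  (forall x y, q (vadd x y) <= q x + q y) /\
  (forall a x, 0 <= a -> q (vscale a x) = a * q x).
Definition subsp m (D : vec m -> Prop) :=
  D (@vzero m) /\ (forall x y, D x -> D y -> D (vadd x y)) /\
  (forall a x, D x -> D (vscale a x)).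
Definition linon m (D : vec m -> Prop) (F : vec m -> R) :=
  (forall x y, D x -> D y -> F (vadd x y) = F x + F y) /\
  (forall a x, D x -> F (vscale a x) = a * F x).

Ltac vext := apply: vec_ext => i; rewrite /vadd /vscale /vzero.

Ltac vext2 := idtac.
Lemma hb_step m (q : vec m -> R) D F (y : vec m) :
  sublin q -> subsp D -> linon D F -> (forall x, D x -> F x <= q x) ->
  exists D' F', subsp D' /\ linon D' F' /\ (forall x, D' x -> F' x <= q x) /\
    D' y /\ (forall x, D x -> D' x /\ F' x = F x).
Proof.
move=> [qa qh] [D0 [Dad Dsc]] [Fa Fs] Fq.
case: (classic (D y)) => Dy.
  by exists D, F; do 4 (split => //).
pose A := fun r => exists x, D x /\ r = F x - q (vadd x (vscale (-1) y)).
have Ab : forall x r, D x -> A r -> r <= q (vadd x y) - F x.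
  move=> x r Dx [x' [Dx' ->]].
  have e: vadd x' x = vadd (vadd x' (vscale (-1) y)) (vadd x y) by vext; ring.
  have := qa (vadd x' (vscale (-1) y)) (vadd x y). rewrite -e.
  have := Fq _ (Dad _ _ Dx' Dx). rewrite Fa //. lra.
have [c cl] : {c | is_lub A c}.
  apply: completeness.
    exists (q (vadd (@vzero m) y) - F (@vzero m)) => r Ar; exact: Ab.
  exists (F (@vzero m) - q (vadd (@vzero m) (vscale (-1) y))). by exists (@vzero m).
have cA : forall x, D x -> F x - q (vadd x (vscale (-1) y)) <= c.
  by move=> x Dx; apply: (proj1 cl); exists x.
have cB : forall x, D x -> c <= q (vadd x y) - F x.
  by move=> x Dx; apply: (proj2 cl) => r Ar; exact: Ab.
have uniq : forall x t x' t', D x -> D x' ->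
    vadd x (vscale t y) = vadd x' (vscale t' y) -> x = x' /\ t = t'.
  move=> x t x' t' Dx Dx' E.
  case: (Req_dec t t') => tt.
    subst t'; split=>//; apply: vec_ext => i.
    have := f_equal (fun v => v i) E; rewrite /= /vadd /vscale; lra.
  exfalso; apply: Dy.
  have -> : y = vscale (/(t - t')) (vadd x' (vscale (-1) x)).
    vext. have := f_equal (fun v => v i) E; rewrite /= /vadd /vscale => Ei.
    rewrite (_ : x' i + -1 * x i = (t - t') * y i); last nra.
    field; exact: Rminus_eq_contra.
  by apply Dsc; apply Dad => //; apply Dsc.
pose F' := fun z => epsilon (inhabits 0)
  (fun r => exists x t, D x /\ z = vadd x (vscale t y) /\ r = F x + t * c).
have F'E : forall x t, D x -> F' (vadd x (vscale t y)) = F x + t * c.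
  move=> x t Dx.
  have := epsilon_spec (inhabits 0)
   (fun r => exists x0 t0, D x0 /\ vadd x (vscale t y) = vadd x0 (vscale t0 y) /\ r = F x0 + t0 * c)
   (ex_intro _ (F x + t*c) (ex_intro _ x (ex_intro _ t (conj Dx (conj erefl erefl))))).
  rewrite -/(F' _) => -[x' [t' [Dx' [E ->]]]].
  by have [-> ->] := uniq _ _ _ _ Dx Dx' E.
pose D' := fun z => exists x t, D x /\ z = vadd x (vscale t y).
exists D', F'. split; [|split; [|split; [|split]]].
- split; [|split].
  + exists (@vzero m), 0; split => //; vext; ring.
  + move=> _ _ [x1 [t1 [D1 ->]]] [x2 [t2 [D2 ->]]].
    exists (vadd x1 x2), (t1 + t2); split; first exact: Dad.
    vext; ring.
  + move=> a _ [x1 [t1 [D1 ->]]].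
    exists (vscale a x1), (a * t1); split; first exact: Dsc.
    vext; ring.
- split.
  + move=> _ _ [x1 [t1 [D1 ->]]] [x2 [t2 [D2 ->]]].
    have -> : vadd (vadd x1 (vscale t1 y)) (vadd x2 (vscale t2 y)) =
              vadd (vadd x1 x2) (vscale (t1 + t2) y) by vext; ring.
    rewrite !F'E ?Fa //; [ring | exact: Dad].
  + move=> a _ [x1 [t1 [D1 ->]]].
    have -> : vscale a (vadd x1 (vscale t1 y)) = vadd (vscale a x1) (vscale (a * t1) y)
      by vext; ring.
    rewrite !F'E ?Fs //; [ring | exact: Dsc].
- move=> _ [x [t [Dx ->]]]; rewrite F'E //.
  case: (Rtotal_order t 0) => [tn | [t0 | tp]].
  + pose s := - t.
    have sp : 0 < s by rewrite /s; lra.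
    have h := cA _ (Dsc (/s) _ Dx).
    have -> : vadd x (vscale t y) =
       vscale s (vadd (vscale (/s) x) (vscale (-1) y)).
      vext; rewrite /s; field; lra.
    rewrite qh; last lra.
    rewrite Fs // in h.
    have h2 := Rmult_le_compat_l s _ _ (Rlt_le _ _ sp) h.
    have : s * (/s * F x) = F x by field; lra.
    rewrite /s in h2 * => ?; nra.
  + subst t. have -> : vadd x (vscale 0 y) = x by vext; ring.
    have := Fq _ Dx; lra.
  + have h := cB _ (Dsc (/t) _ Dx).
    have -> : vadd x (vscale t y) = vscale t (vadd (vscale (/t) x) y).
      vext; field; lra.
    rewrite qh; last lra.
    rewrite Fs // in h.
    have h2 := Rmult_le_compat_l t _ _ (Rlt_le _ _ tp) h.
    have : t * (/t * F x) = F x by field; lra.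
    move=> ?; nra.
- exists (@vzero m), 1; split => //; vext; ring.
- move=> x Dx.
  have E : x = vadd x (vscale 0 y) by vext; ring.
  split; first by exists x, 0.
  rewrite {1}E F'E //; ring.
Qed.

Lemma subsp_big m (D : vec m -> Prop) (f : 'I_m -> vec m) :
  subsp D -> (forall k, D (f k)) -> D (\big[@vadd m/@vzero m]_(k < m) f k).
Proof.
move=> [D0 [Dad Dsc]] Df; apply: (big_rec D) => // k v _ Dv; exact: Dad.
Qed.

Lemma lin_zero m (D : vec m -> Prop) G : subsp D -> linon D G -> G (@vzero m) = 0.
Proof.
move=> [D0 _] [_ Gs].
have -> : @vzero m = vscale 0 (@vzero m) by vext; ring.
rewrite Gs //; ring.
Qed.

Lemma lin_big m (D : vec m -> Prop) G (f : 'I_m -> vec m) :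
  subsp D -> linon D G -> (forall k, D (f k)) ->
  G (\big[@vadd m/@vzero m]_(k < m) f k) = \big[Rplus/0]_(k < m) G (f k).
Proof.
move=> sD lG Df.
have [D0 [Dad Dsc]] := sD; have [Ga Gs] := lG.
suff [] : D (\big[@vadd m/@vzero m]_(k < m) f k) /\ G (\big[@vadd m/@vzero m]_(k < m) f k) = \big[Rplus/0]_(k < m) G (f k) by [].
apply: (big_rec2 (fun a b => D a /\ G a = b)) => [|k a b _ [Da <-]].
  split => //; exact: lin_zero sD lG.
split; first exact: Dad.
by rewrite Ga.
Qed.

Lemma lin_repr m (D : vec m -> Prop) G :
  subsp D -> linon D G -> (forall k, D (ev k)) ->
  forall x, D x /\ G x = ip (fun k => G (ev k)) x.
Proof.
move=> sD lG De x.
have [D0 [Dad Dsc]] := sD; have [Ga Gs] := lG.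
have E := vdecomp x; split.
  rewrite E; apply: subsp_big => // k; exact: Dsc.
rewrite {1}E (lin_big sD lG); last by move=> k; exact: Dsc.
rewrite /ip; apply: eq_bigr => k _; rewrite Gs //; ring.
Qed.

Lemma hb_iter m (q : vec m -> R) D F : sublin q -> subsp D -> linon D F ->
  (forall x, D x -> F x <= q x) -> forall j, (j <= m)%N ->
  exists D' G, subsp D' /\ linon D' G /\ (forall x, D' x -> G x <= q x) /\
    (forall k : 'I_m, (k < j)%N -> D' (ev k)) /\ (forall x, D x -> D' x /\ G x = F x).
Proof.
move=> sq sD lF Fq; elim => [_ | j IH jm].
  exists D, F; do 3 (split => //); split => //.
have [D1 [G1 [sD1 [lG1 [G1q [De1 ex1]]]]]] := IH (ltnW jm).
have [D2 [G2 [sD2 [lG2 [G2q [Dy ex2]]]]]] := hb_step (ev (Ordinal jm)) sq sD1 lG1 G1q.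
exists D2, G2; do 3 (split => //); split.
  move=> k; rewrite ltnS leq_eqVlt => /orP [/eqP kj | kj].
    by have -> : k = Ordinal jm by apply: val_inj.
  by have [] := ex2 _ (De1 _ kj).
move=> x Dx; have [D1x <-] := ex1 _ Dx; exact: ex2.
Qed.

Lemma hb_full m (q : vec m -> R) D F : sublin q -> subsp D -> linon D F ->
  (forall x, D x -> F x <= q x) ->
  exists f : vec m, (forall x, ip f x <= q x) /\ (forall x, D x -> ip f x = F x).
Proof.
move=> sq sD lF Fq.
have [D' [G [sD' [lG [Gq [De ex]]]]]] := hb_iter sq sD lF Fq (leqnn m).
have De' : forall k, D' (ev k) by move=> k; apply: De.
exists (fun k => G (ev k)); split.
  move=> x; have [Dx <-] := lin_repr sD' lG De' x; exact: Gq.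
move=> x Dx; have [D'x <-] := ex _ Dx.
by have [_ <-] := lin_repr sD' lG De' x.
Qed.

Lemma norm0 m (p : vec m -> R) : is_norm p -> p (@vzero m) = 0.
Proof.
move=> [_ [_ [ps _]]].
have -> : @vzero m = vscale 0 (@vzero m) by vext; ring.
rewrite ps Rabs_R0; ring.
Qed.

Lemma normN m (p : vec m -> R) x : is_norm p -> p (vscale (-1) x) = p x.
Proof. move=> [_ [_ [ps _]]]; rewrite ps Rabs_Ropp Rabs_R1; ring. Qed.

Lemma norm_pos m (p : vec m -> R) x : is_norm p -> x <> @vzero m -> 0 < p x.
Proof.
move=> [pp [pd _]] nx; case: (pp x) => // h; exfalso; apply: nx; exact: pd.
Qed.

Lemma norm_sublin m (p : vec m -> R) C : is_norm p -> 0 <= C ->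
  sublin (fun x => C * p x).
Proof.
move=> [pp [pd [ps pt]]] C0; split.
  move=> x y; have := pt x y; nra.
move=> a x a0; rewrite ps Rabs_pos_eq //; ring.
Qed.

Lemma norm_sublin1 m (p : vec m -> R) : is_norm p -> sublin p.
Proof.
move=> [pp [pd [ps pt]]]; split => // a x a0; rewrite ps Rabs_pos_eq //.
Qed.

Lemma norm_upper m (p : vec m -> R) x : is_norm p ->
  p x <= \big[Rplus/0]_(k < m) (Rabs (x k) * p (ev k)).
Proof.
move=> np; have [pp [pd [ps pt]]] := np.
rewrite {1}(vdecomp x).
apply: (big_rec2 (fun a b => p a <= b)) => [|k a b _ h].
  rewrite norm0 //; lra.
apply: Rle_trans (pt _ _) _; rewrite ps; lra.
Qed.

Lemma ip_zero_l m (x : vec m) : ip (@vzero m) x = 0.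
Proof. by rewrite ip_comm ip_zero_r. Qed.

Lemma norming m (p : vec m -> R) u : is_norm p ->
  exists f, (forall x, ip f x <= p x) /\ ip f u = p u.
Proof.
move=> np; have [pp [pd [ps pt]]] := np.
case: (classic (u = @vzero m)) => [-> | nu].
  exists (@vzero m); split; last by rewrite ip_zero_l norm0.
  by move=> x; rewrite ip_zero_l.
have [k uk] : exists k, u k <> 0.
  apply: NNPP => h; apply: nu; apply: vec_ext => k.
  by apply: NNPP => h2; apply: h; exists k.
pose w := vscale (p u / u k) (ev k).
have wu : ip w u = p u.
  rewrite /w ip_scale_l ip_comm ip_ev; field => //.
pose D := fun z => exists a, z = vscale a u.
have sD : subsp D.
  split; [|split].
  - exists 0; vext; ring.
  - move=> _ _ [a ->] [b ->]; exists (a + b); vext; ring.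
  - move=> c _ [a ->]; exists (c * a); vext; ring.
have lF : linon D (ip w).
  split; [move=> x y _ _; exact: ip_add_r | move=> a x _; exact: ip_scale_r].
have Fq : forall x, D x -> ip w x <= p x.
  move=> _ [a ->]; rewrite ip_scale_r wu ps.
  have := pp u; have := Rle_abs a; nra.
have [f [fq fe]] := hb_full (norm_sublin1 np) sD lF Fq.
exists f; split => //.
rewrite fe ?wu //; exists 1; vext; ring.
Qed.

Lemma sum_le m (a b : 'I_m -> R) : (forall k, a k <= b k) ->
  \big[Rplus/0]_(k < m) a k <= \big[Rplus/0]_(k < m) b k.
Proof.
move=> h; apply: (big_rec2 (fun x y => x <= y)) => [|k x y _ hxy]; first lra.
have := h k; lra.
Qed.

Lemma sum_ge0 m (a : 'I_m -> R) : (forall k, 0 <= a k) -> 0 <= \big[Rplus/0]_(k < m) a k.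
Proof.
move=> h; apply: (big_rec (fun x => 0 <= x)) => [|k x _ hx]; first lra.
have := h k; lra.
Qed.

Lemma lb_step m (p : vec m -> R) d C : is_norm p -> 0 <= C ->
  (forall x : vec m, (forall i : 'I_m, (d <= i)%N -> x i = 0) ->
     forall i, Rabs (x i) <= C * p x) ->
  exists C', 0 <= C' /\ forall x : vec m, (forall i : 'I_m, (d.+1 <= i)%N -> x i = 0) ->
     forall i, Rabs (x i) <= C' * p x.
Proof.
move=> np C0 IH.
have [pp [pd [ps pt]]] := np.
case: (ltnP d m) => dm; last first.
  exists C; split => // x hx i; apply: IH => j dj.
  by have := ltn_ord j; rewrite ltnNge (leq_trans dm dj).
pose dd := Ordinal dm.
pose V := fun x : vec m => forall i : 'I_m, (d <= i)%N -> x i = 0.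
have sV : subsp V.
  split; [|split].
  - by move=> i _.
  - by move=> x y hx hy i di; rewrite /vadd hx ?hy //; ring.
  - by move=> a x hx i di; rewrite /vscale hx //; ring.
have exG : forall i : 'I_m, exists g : vec m,
    (forall x, ip g x <= C * p x) /\ (forall x, V x -> ip g x = x i).
  move=> i.
  have lF : linon V (fun x => x i) by split => // *.
  have Fq : forall x, V x -> x i <= C * p x.
    move=> x hx; have := IH x hx i; have := Rle_abs (x i); lra.
  exact: hb_full (norm_sublin np C0) sV lF Fq.
pose G := fun i => epsilon (inhabits (@vzero m))
   (fun g => (forall x, ip g x <= C * p x) /\ (forall x, V x -> ip g x = x i)).
have GS : forall i, (forall x, ip (G i) x <= C * p x) /\ (forall x, V x -> ip (G i) x = x i).
  move=> i; exact: epsilon_spec (exG i).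
have Gabs : forall i x, Rabs (ip (G i) x) <= C * p x.
  move=> i x; have [h _] := GS i.
  have := h x; have := h (vscale (-1) x); rewrite ip_scale_r normN //.
  move=> h1 h2; apply: Rabs_le; lra.
pose u : vec m := fun k => if (k < d)%N then - ip (G k) (ev dd)
                           else if k == dd then 1 else 0.
have udd : u dd = 1 by rewrite /u /= ltnn eqxx.
have pu : 0 < p u.
  apply: norm_pos => // h; have := f_equal (fun v => v dd) h; rewrite /= udd /vzero; lra.
pose S := \big[Rplus/0]_(k < m) p (ev k).
have S0 : 0 <= S by apply: sum_ge0 => k.
pose K := (1 + C * S) / p u.
have K0 : 0 <= K.
  rewrite /K; apply: Rle_mult_inv_pos => //; nra.
have pe0 := pp (ev dd).
have W0 : 0 <= C * (1 + K * p (ev dd)).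
  apply: Rmult_le_pos => //; have := Rmult_le_pos _ _ K0 pe0; lra.
exists (K + C * (1 + K * p (ev dd))); split; first lra.
move=> x hx.
pose t := x dd.
pose v := vadd x (vscale (- t) (ev dd)).
have Vv : V v.
  move=> i di; rewrite /v /vadd /vscale /ev.
  case: eqP => [-> | ne]; first by rewrite /t; ring.
  rewrite hx; first ring.
  rewrite ltn_neqAle di andbT; apply/eqP => e; apply: ne; exact: val_inj.
have xv : x = vadd v (vscale t (ev dd)) by vext; rewrite /v /vadd /vscale; ring.
pose pi : vec m := fun k => if (k < d)%N then ip (G k) x else 0.
have E : vadd x (vscale (-1) pi) = vscale t u.
  vext; rewrite /pi /u.
  case: ltnP => ki.
    rewrite [in ip (G i) x]xv ip_add_r ip_scale_r (proj2 (GS i)) //.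
    rewrite /v /vadd /vscale /ev.
    have -> : (i == dd) = false.
      apply/negbTE; apply/eqP => e; move: ki; rewrite e /= ltnn //.
    ring.
  case: eqP => [-> | ne]; first by rewrite /t; ring.
  rewrite hx; first ring.
  rewrite ltn_neqAle ki andbT; apply/eqP => e; apply: ne; exact: val_inj.
have ppi : p pi <= C * p x * S.
  apply: Rle_trans (norm_upper pi np) _.
  rewrite /S big_distrr /=; apply: sum_le => k.
  apply: Rmult_le_compat_r => //.
  rewrite /pi; case: ltnP => _; first exact: Gabs.
  rewrite Rabs_R0; have := pp x; nra.
have tb : Rabs t * p u <= (1 + C * S) * p x.
  have := pt x (vscale (-1) pi); rewrite E ps normN //; nra.
have tK : Rabs t <= K * p x.
  rewrite /K; apply: (Rmult_le_reg_r (p u)) => //.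
  have -> : (1 + C * S) / p u * p x * p u = (1 + C * S) * p x by field; lra.
  exact: tb.
have px0 := pp x.
have at0 := Rabs_pos t.
move=> i.
case: (ltnP i d) => id.
  have -> : x i = v i.
    rewrite /v /vadd /vscale /ev.
    have -> : (i == dd) = false.
      apply/negbTE; apply/eqP => e; move: id; rewrite e /= ltnn //.
    ring.
  have h1 := IH v Vv i.
  have h2 : p v <= p x + Rabs t * p (ev dd).
    by apply: Rle_trans (pt _ _) _; rewrite ps Rabs_Ropp; lra.
  have h3 : p v <= (1 + K * p (ev dd)) * p x by nra.
  nra.
case: (eqVneq i dd) => [-> | ne].
  rewrite -/t Rmult_plus_distr_r; have := Rmult_le_pos _ _ W0 px0; lra.
rewrite hx; last first.
  rewrite ltn_neqAle id andbT; apply/eqP => e; by move: ne; rewrite (_ : i = dd) ?eqxx //; apply: val_inj.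
rewrite Rabs_R0; apply: Rmult_le_pos => //; lra.
Qed.

Lemma lower_bound m (p : vec m -> R) : is_norm p ->
  exists C, 0 <= C /\ forall (x : vec m) i, Rabs (x i) <= C * p x.
Proof.
move=> np.
suff H : forall d, exists C, 0 <= C /\ forall x : vec m,
   (forall i : 'I_m, (d <= i)%N -> x i = 0) -> forall i, Rabs (x i) <= C * p x.
  have [C [C0 h]] := H m; exists C; split => // x i; apply: h => j mj.
  by have := ltn_ord j; rewrite ltnNge mj.
elim => [|d [C [C0 IH]]].
  exists 0; split; first lra.
  move=> x hx i; rewrite hx // Rabs_R0; lra.
exact: (lb_step np C0 IH).
Qed.

Definition dset m (p : vec m -> R) (h : vec m) :=
  fun t => exists e, p e <= 1 /\ t = ip h e.

Lemma dual_lub m (p : vec m -> R) h : is_norm p -> is_lub (dset p h) (dual_norm p h).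
Proof.
move=> np; have [pp [pd [ps pt]]] := np.
have [C [C0 HC]] := lower_bound np.
have ex : exists s, is_lub (dset p h) s.
  have b : bound (dset p h).
    exists (\big[Rplus/0]_(k < m) (Rabs (h k) * C)) => _ [e [pe ->]].
    rewrite /ip; apply: sum_le => k.
    apply: Rle_trans (Rle_abs _) _; rewrite Rabs_mult.
    apply: Rmult_le_compat_l; first exact: Rabs_pos.
    have := HC e k; nra.
  have ne : exists x, dset p h x.
    exists 0, (@vzero m); split; first by rewrite norm0 //; lra.
    by rewrite ip_zero_r.
  have [s hs] := completeness _ b ne; by exists s.
exact: (epsilon_spec (inhabits 0) _ ex).
Qed.

Lemma dual_le1 m (p : vec m -> R) h : is_norm p -> (forall e, ip h e <= p e) ->
  dual_norm p h <= 1.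
Proof.
move=> np H; apply: (proj2 (dual_lub h np)) => _ [e [pe ->]].
have := H e; lra.
Qed.

Lemma dual_bound m (p : vec m -> R) h e : is_norm p -> ip h e <= dual_norm p h * p e.
Proof.
move=> np; have [pp [pd [ps pt]]] := np.
have [ub _] := dual_lub h np.
case: (classic (e = @vzero m)) => [-> | ne].
  rewrite ip_zero_r norm0 // Rmult_0_r; lra.
have pe := norm_pos np ne.
have h1 : ip h (vscale (/ p e) e) <= dual_norm p h.
  apply: ub; exists (vscale (/ p e) e); split => //.
  rewrite ps Rabs_pos_eq; last by apply: Rlt_le; apply: Rinv_0_lt_compat.
  rewrite Rinv_l; lra.
rewrite ip_scale_r in h1.
apply: (Rmult_le_reg_r (/ p e)); first exact: Rinv_0_lt_compat.
rewrite Rmult_assoc Rinv_r; last lra.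
rewrite Rmult_1_r; lra.
Qed.

Lemma decomp m (p : vec m -> R) P : is_norm p ->
  (forall f g, dual_norm p (vadd (app (adj P) f) (app (adj (msub (@idm m) P)) g))
       <= Rmax (dual_norm p f) (dual_norm p g)) ->
  forall u, p (app P u) + p (app (msub (@idm m) P) u) <= p u.
Proof.
move=> np Hd u; have [pp [pd [ps pt]]] := np.
have [f [fq fe]] := norming (app P u) np.
have [g [gq ge]] := norming (app (msub (@idm m) P) u) np.
have hd := Hd f g.
have df := dual_le1 np fq; have dg := dual_le1 np gq.
have h1 : dual_norm p (vadd (app (adj P) f) (app (adj (msub (@idm m) P)) g)) <= 1.
  apply: Rle_trans hd _; apply: Rmax_lub => //.
have := dual_bound (vadd (app (adj P) f) (app (adj (msub (@idm m) P)) g)) u np.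
rewrite ip_add_l !ip_adj fe ge.
have := pp u; nra.
Qed.
Unset Implicit Arguments.

Theorem lemma7 (n m p : nat) (nrm : vec m -> R) (fam : mat m m -> Prop)
  (nu : mat m m -> R) (Pbar : mat m m -> mat m m) (B : mat m p) (A : mat n p) :
  sparsity_structure nrm fam nu Pbar ->
  (forall x y, app B x = app B y -> x = y) ->
  (forall e, exists x, app B x = e) ->
  (forall P, fam P -> Pbar P = msub (@idm m) P) ->
  (forall P, fam P -> forall z, CP nrm B P z <-> DP nrm B P (Pbar P) z) /\
  (forall k, 0 <= k -> mu_k nrm fam nu B A k = sigma_k nrm fam nu Pbar B A k).
Proof.
move=> [np Hs] _ Bsurj HPb.
have [pp [pd [ps pt]]] := np.
have part1 : forall P, fam P -> forall z, CP nrm B P z <-> DP nrm B P (Pbar P) z.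
  move=> P fP z; have [PP [_ [_ Hd]]] := Hs P fP.
  rewrite /DP HPb //; rewrite HPb // in Hd.
  have Hdec := decomp np Hd.
  split.
  - move=> [x [Px [l [z' [l0 [hn ->]]]]]].
    set E := app B x in Px hn *; set W := app B z' in hn *.
    have h1 := Hdec (vadd E W).
    have e1 : app P (vadd E W) = vadd E (app P W) by rewrite app_add Px.
    have e2 : app (msub (@idm m) P) (vadd E W) = app (msub (@idm m) P) W.
      rewrite !app_Pbar e1; vext; ring.
    rewrite e1 e2 in h1.
    have h2 : nrm E <= nrm (vadd E (app P W)) + nrm (app P W).
      have := pt (vadd E (app P W)) (vscale (-1) (app P W)).
      rewrite normN //.
      have -> : vadd (vadd E (app P W)) (vscale (-1) (app P W)) = E by vext; ring.
      done.
    rewrite !app_scale !ps Rabs_pos_eq //.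
    apply: Rmult_le_compat_l => //; rewrite -/W; lra.
  - move=> hD.
    have [x Bx] := Bsurj (vscale (-1) (app P (app B z))).
    exists x; split.
      rewrite Bx app_scale -app_mmul PP //.
    exists 1, z; split; first lra; split; last by vext; ring.
    rewrite Bx normN //.
    have -> : vadd (vscale (-1) (app P (app B z))) (app B z) =
              app (msub (@idm m) P) (app B z) by rewrite app_Pbar; vext; ring.
    done.
split => // k _.
rewrite /mu_k /sigma_k; congr Inf.
apply: functional_extensionality => r; apply: propositional_extensionality; split.
- move=> [P [x [z [fP [nk [Px [tc [nz ->]]]]]]]].
  exists P, z; do 3 (split => //); split => //.
  apply/(part1 P fP); by exists x.
- move=> [P [z [fP [nk [nz [hD ->]]]]]].
  have [x [Px tc]] := (proj2 (part1 P fP z)) hD.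
  by exists P, x, z.
Qed.
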